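(* Let $G=(V,E)$ be a connected undirected unweighted graph in which every node has a self-loop. Then the set function $S\mapsto\operatorname{fp}^{\infty}(G^S)$ on subsets of $V$ is submodular.
   Context: Positional Voter model. A graph $G=(V,E,w)$ has node set $V$ with $|V|=n$, edge set $E\subseteq V\times V$ and weights $w\colon E\to\mathbb{R}_{>0}$; $\operatorname{in}(u)=\{v\in V:(v,u)\in E\}$. ''Undirected unweighted'' means $E$ is symmetric and $w\equiv 1$; ''self-loop at $u$'' means $(u,u)\in E$. A configuration is a set $X\subseteq V$ (the nodes carrying the novel trait $A$). Given a biased set $S\subseteq V$ and bias $\delta\ge 0$, define $f^S_X(v\mid u)=1+\delta$ if $v\in X$ and $u\in S$, and $1$ otherwise. The process $(\mathcal{X}_t)_{t\ge0}$: given $\mathcal{X}_t=X$, a node $u$ is chosen uniformly at random from $V$, then $v\in\operatorname{in}(u)$ is chosen with probability $\frac{f^S_X(v\mid u)\,w(v,u)}{\sum_{x\in\operatorname{in}(u)} f^S_X(x\mid u)\,w(x,u)}$, and $\mathcal{X}_{t+1}=X\cup\{u\}$ if $v\in X$, $\mathcal{X}_{t+1}=X\setminus\{u\}$ otherwise. Define $\operatorname{fp}(G^S,\delta,X)=\mathbb{P}[\exists t\ge0:\mathcal{X}_t=V\mid\mathcal{X}_0=X]$, $\operatorname{fp}(G^S,\delta)=\frac1n\sum_{u\in V}\operatorname{fp}(G^S,\delta,\{u\})$, and $\operatorname{fp}^{\infty}(G^S)=\lim_{\delta\to\infty}\operatorname{fp}(G^S,\delta)$. A set function $f$ on subsets of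 $V$ is submodular if $f(S_1)+f(S_2)\ge f(S_1\cup S_2)+f(S_1\cap S_2)$ for all $S_1,S_2\subseteq V$. *)

(* Defs.v *)
From HB Require Import structures.
From mathcomp Require Import all_boot all_order all_algebra.
From mathcomp Require Import all_classical all_reals all_analysis.
Set Implicit Arguments. Unset Strict Implicit. Unset Printing Implicit Defensive.
Import Order.TTheory GRing.Theory Num.Theory.
Import numFieldTopology.Exports numFieldNormedType.Exports.
Local Open Scope ring_scope.

Section PositionalVoter.
Variables (R : realType) (V : finType).
(* E v u : the (unweighted) edge (v,u) is in E; all weights are 1. *)
Variable E : rel V.
Variables (S : {set V}) (delta : R).

Definition pv_fitness (X : {set V}) (v u : V) : R :=
  if (v \in X) && (u \in S) then 1 + delta else 1.

Definition pv_step (X : {set V}) (u v : V) : {set V} :=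
  if v \in X then u |: X else X :\ u.

Definition pv_trans (X Y : {set V}) : R :=
  \sum_(u : V) (#|V|%:R)^-1 *
    \sum_(v : V | E v u)
       (pv_fitness X v u / \sum_(x : V | E x u) pv_fitness X x u)
       * (Y == pv_step X u v)%:R.

(* pv_hit T X = P[exists t <= T, X_t = V | X_0 = X] *)
Fixpoint pv_hit (T : nat) (X : {set V}) : R :=
  match T with
  | 0 => (X == [set: V])%:R
  | T'.+1 => if X == [set: V] then 1
             else \sum_(Y : {set V}) pv_trans X Y * pv_hit T' Y
  end.

Definition fp_conf (X : {set V}) : R := limn (fun T => pv_hit T X).

Definition fp : R := (#|V|%:R)^-1 * \sum_(u : V) fp_conf [set u].
End PositionalVoter.

Definition fp_inf (R : realType) (V : finType) (E : rel V) (S : {set V}) : R :=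
  lim ((fun d : R => fp E S d) @ +oo%R)%classic.

Definition submodular (R : realType) (V : finType) (f : {set V} -> R) : Prop :=
  forall S1 S2 : {set V}, f (S1 :|: S2) + f (S1 :&: S2) <= f S1 + f S2.

(* Main.v *)
Require Import Defs.
From HB Require Import structures.
From mathcomp Require Import all_boot all_order all_algebra.
From mathcomp Require Import all_classical all_reals all_analysis.
From mathcomp Require Import ring lra.
Set Implicit Arguments. Unset Strict Implicit. Unset Printing Implicit Defensive.
Import Order.TTheory GRing.Theory Num.Theory.
Import numFieldTopology.Exports numFieldNormedType.Exports.
Local Open Scope ring_scope.
Section Chain.
Variables (R : realType) (T : finType) (P : T -> T -> R).
Hypothesis P0 : forall x y, 0 <= P x y.
Hypothesis P1 : forall x, \sum_y P x y = 1.
Implicit Types (a : pred T).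

Fixpoint hit (a : pred T) (n : nat) (x : T) : R :=
  match n with
  | 0 => (a x)%:R
  | n'.+1 => if a x then 1 else \sum_y P x y * hit a n' y
  end.

Lemma hit_ge0 a n x : 0 <= hit a n x.
Proof.
elim: n x => [|n IH] x /=; first by rewrite ler0n.
case: (a x) => //; apply: sumr_ge0 => y _; exact: mulr_ge0.
Qed.

Lemma hit_le1 a n x : hit a n x <= 1.
Proof.
elim: n x => [|n IH] x /=; first by case: (a x); rewrite ?ler01.
case: (a x) => //; rewrite -(P1 x); apply: ler_sum => y _.
by rewrite -{2}(mulr1 (P x y)); apply: ler_wpM2l.
Qed.

Lemma hit_S a n x : hit a n x <= hit a n.+1 x.
Proof.
elim: n x => [|n IH] x /=.
  by case: (a x) => //=; apply: sumr_ge0 => y _; apply: mulr_ge0; rewrite ?ler0n.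
case: (a x) => //; apply: ler_sum => y _; exact: ler_wpM2l.
Qed.

Lemma hit_mono a m n x : (m <= n)%N -> hit a m x <= hit a n x.
Proof.
move=> /subnK <-; elim: (n - m)%N => [|k IH] //=.
exact: le_trans IH (hit_S _ _ _).
Qed.

Lemma hit_step a n x y : ~~ a x -> P x y * hit a n y <= hit a n.+1 x.
Proof.
move=> /negbTE /= ->; rewrite (bigD1 y) //= lerDl.
by apply: sumr_ge0 => z _; apply: mulr_ge0 => //; exact: hit_ge0.
Qed.

Lemma hit_closed0 (a1 a2 : pred T) n x :
  (forall x y, a1 x -> P x y != 0 -> a1 y) ->
  (forall x, a1 x -> ~~ a2 x) -> a1 x -> hit a2 n x = 0.
Proof.
move=> cl dj; elim: n x => [|n IH] x ax /=; first by rewrite (negbTE (dj x ax)).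
rewrite (negbTE (dj x ax)); apply: big1 => y _.
have [->|/(cl _ _ ax)/IH ->] := eqVneq (P x y) 0; by rewrite ?mul0r ?mulr0.
Qed.

Lemma hit_or (a1 a2 : pred T) n x :
  (forall x y, a1 x -> P x y != 0 -> a1 y) ->
  (forall x y, a2 x -> P x y != 0 -> a2 y) ->
  (forall x, a1 x -> ~~ a2 x) ->
  hit (predU a1 a2) n x = hit a1 n x + hit a2 n x.
Proof.
move=> c1 c2 dj.
have dj' : forall x, a2 x -> ~~ a1 x by move=> z z2; apply/negP => /dj; rewrite z2.
elim: n x => [|n IH] x.
  rewrite /=; case a1x: (a1 x); [by rewrite (negbTE (dj x a1x)) addr0 | by rewrite add0r].
case a1x: (a1 x); first by rewrite (hit_closed0 n.+1 c1 dj a1x) addr0 /= a1x.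
case a2x: (a2 x); first by rewrite (hit_closed0 n.+1 c2 dj' a2x) add0r /= a2x a1x.
by rewrite /= a1x a2x -big_split /=; apply: eq_bigr => y _; rewrite IH mulrDr.
Qed.

Definition qh a n x := 1 - hit a n x.

Lemma qh_S a n x : qh a n.+1 x = if a x then 0 else \sum_y P x y * qh a n y.
Proof.
rewrite /qh /=; case: (a x); first by rewrite subrr.
rewrite -{1}(P1 x) -sumrB; apply: eq_bigr => y _; by rewrite mulrBr mulr1.
Qed.

Lemma qh_ge0 a n x : 0 <= qh a n x.
Proof. by rewrite /qh subr_ge0 hit_le1. Qed.

Lemma qh_abs a n x : a x -> qh a n x = 0.
Proof. by case: n => [|n] /= ax; rewrite /qh /= ax ?subrr. Qed.

Lemma qh_decay a m n M : (forall y, qh a n y <= M) ->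
  forall x, qh a (m + n) x <= qh a m x * M.
Proof.
move=> HM; elim: m => [|m IH] x.
  rewrite add0n; case ax: (a x); first by rewrite !qh_abs // mul0r.
  by rewrite /qh /= ax subr0 mul1r; exact: HM.
rewrite addSn !qh_S; case: (a x); first by rewrite mul0r.
rewrite mulr_suml; apply: ler_sum => y _; rewrite -mulrA; exact: ler_wpM2l.
Qed.

Lemma qh_le1 a n x : qh a n x <= 1.
Proof. by rewrite /qh lerBlDr lerDl hit_ge0. Qed.

Lemma qh_anti a m k x : (m <= k)%N -> qh a k x <= qh a m x.
Proof. by move=> mk; rewrite /qh lerB // hit_mono. Qed.

Lemma qh_pow a n (eps : R) : (forall y, qh a n y <= 1 - eps) ->
  forall K x, qh a (K * n) x <= (1 - eps) ^+ K.
Proof.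
move=> Hn; elim=> [|K IH] x; first by rewrite mul0n expr0 qh_le1.
rewrite mulSnr exprSr; apply: le_trans (qh_decay (K * n) Hn x) _.
apply: ler_wpM2r; last exact: IH.
by apply: le_trans (Hn x); exact: qh_ge0.
Qed.

Lemma qh_cvg0 a n (eps : R) : 0 < eps -> eps <= 1 -> (forall y, qh a n y <= 1 - eps) ->
  forall x, (qh a k x @[k --> \oo] --> 0)%classic.
Proof.
move=> e0 e1 Hn x; apply/cvgrPdist_le => e ep.
have z1 : `|1 - eps| < 1.
  by rewrite ger0_norm ?subr_ge0 // ltrBlDr ltrDl.
have := cvg_expr z1; move/cvgr_dist_le => /(_ e ep) [K _ HK].
exists (K * n)%N => // k /= Hk; rewrite sub0r normrN ger0_norm ?qh_ge0 //.
apply: le_trans (qh_anti _ _ Hk) _; apply: le_trans (qh_pow Hn K x) _.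
have := HK K (leqnn K); rewrite sub0r normrN ger0_norm //.
by apply: exprn_ge0; rewrite subr_ge0.
Qed.

End Chain.
Lemma cvg_sumf (R : realType) {U : Type} {F : set_system U} {FF : Filter F}
  (I : finType) (f : I -> U -> R) (l : I -> R) :
  (forall i, f i @ F --> l i)%classic -> ((fun u => \sum_i f i u) @ F --> \sum_i l i)%classic.
Proof.
move=> H; suff: forall s : seq I,
    ((fun u => \sum_(i <- s) f i u) @ F --> \sum_(i <- s) l i)%classic by apply.
elim=> [|i s IH].
  under eq_fun do rewrite big_nil; rewrite big_nil; exact: cvg_cst.
under eq_fun do rewrite big_cons; rewrite big_cons; exact: cvgD.
Qed.

Lemma hit_cvg (R : realType) (T : finType) (Pd : R -> T -> T -> R) (L : T -> T -> R)
  (a : pred T) n x :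
  (forall x y, ((fun d => Pd d x y) @ +oo --> L x y)%classic) ->
  ((fun d => hit (Pd d) a n x) @ +oo --> hit L a n x)%classic.
Proof.
move=> HP; elim: n x => [|n IH] x /=; first exact: cvg_cst.
case: (a x); first exact: cvg_cst.
apply: cvg_sumf => y; exact: cvgM.
Qed.

Lemma cvg_sumf_cond (R : realType) {U : Type} {F : set_system U} {FF : Filter F}
  (I : finType) (P : pred I) (f : I -> U -> R) (l : I -> R) :
  (forall i, P i -> f i @ F --> l i)%classic ->
  ((fun u => \sum_(i | P i) f i u) @ F --> \sum_(i | P i) l i)%classic.
Proof.
move=> H; rewrite big_mkcond /=; under eq_fun do rewrite big_mkcond /=.
apply: cvg_sumf => i; case Pi: (P i); first exact: H.
exact: cvg_cst.
Qed.
Lemma cvg_ratio (R : realType) (b c D k : R) : 0 < k ->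
  ((fun d => (b * d + c) / (k * d + D)) @ +oo --> b / k)%classic.
Proof.
move=> k0; apply/cvgrPdist_le => e e0.
set M := (`|b * D - k * c| / (e * k) + `|D| + 1) / k.
near=> d.
have hd : M < d.
  near: d; apply: nbhs_pinfty_gt; exact: num_real.
have kdM : `|b * D - k * c| / (e * k) + `|D| + 1 < k * d.
  by move: hd; rewrite /M ltr_pdivrMr // (mulrC d).
have hN : - D <= `|D| by rewrite -normrN ler_norm.
have hP : D <= `|D| by rewrite ler_norm.
have h0 : 0 <= `|b * D - k * c| / (e * k).
  by apply: divr_ge0; rewrite ?normr_ge0 ?mulr_ge0 // ltW.
have X0 : 0 < k * d + D by lra.
have -> : b / k - (b * d + c) / (k * d + D) = (b * D - k * c) / (k * (k * d + D)).
  by field; apply/andP; split; apply: lt0r_neq0.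
rewrite normrM normfV (gtr0_norm (mulr_gt0 k0 X0)) -/(_ / _) ler_pdivrMr ?mulr_gt0 //.
have : `|b * D - k * c| / (e * k) <= k * d + D by lra.
rewrite ler_pdivrMr ?mulr_gt0 // => h; apply: le_trans h _.
by rewrite le_eqVlt; apply/orP; left; apply/eqP; ring.
Unshelve. all: by end_near.
Qed.
Section Model.
Variables (R : realType) (V : finType) (E : rel V).
Hypothesis Esym : symmetric E.
Hypothesis Erefl : forall u, E u u.
Hypothesis Econn : forall u v, connect E u v.

Local Notation n := #|V|.
Local Notation emp := (@finset.set0 V).
Local Notation full := [set: V].
Implicit Types (S X Y B : {set V}) (u v : V).
Definition deg (u : V) : nat := #|[pred x | E x u]|.
Definition nbX (X : {set V}) (u : V) : nat := #|[pred x | E x u && (x \in X)]|.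

Lemma deg_gt0 u : (0 < deg u)%N.
Proof. by apply/card_gt0P; exists u; rewrite inE /= Erefl. Qed.

Lemma deg_le u : (deg u <= n)%N.
Proof. exact: max_card. Qed.

Lemma sum_shape (c : R) (W : V -> V -> R) (f : V -> V -> {set V}) (g : {set V} -> R) :
  \sum_Y (\sum_u c * \sum_(v | E v u) W u v * (Y == f u v)%:R) * g Y =
  \sum_u c * \sum_(v | E v u) W u v * g (f u v).
Proof.
under eq_bigr do rewrite mulr_suml; rewrite exchange_big; apply: eq_bigr => u _.
under eq_bigr do rewrite -mulrA; rewrite -mulr_sumr; congr (c * _).
under eq_bigr do rewrite mulr_suml; rewrite exchange_big; apply: eq_bigr => v _.
rewrite (bigD1 (f u v)) //= eqxx mulr1 big1 ?addr0 // => Y /negbTE ->.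
by rewrite mulr0 mul0r.
Qed.

Lemma sum_shape1 (c : R) (W : V -> V -> R) (f : V -> V -> {set V}) :
  \sum_Y (\sum_u c * \sum_(v | E v u) W u v * (Y == f u v)%:R) =
  \sum_u c * \sum_(v | E v u) W u v.
Proof.
rewrite exchange_big; apply: eq_bigr => u _; rewrite -mulr_sumr; congr (c * _).
rewrite exchange_big; apply: eq_bigr => v _.
rewrite (bigD1 (f u v)) //= eqxx mulr1 big1 ?addr0 // => Y /negbTE ->.
by rewrite mulr0.
Qed.

Lemma pv_hitE S (d : R) T X :
  pv_hit E S d T X = hit (pv_trans E S d) (fun X => X == [set: V]) T X.
Proof. by elim: T X => //= T IH X; under eq_bigr do rewrite IH. Qed.


Hypothesis Vn0 : (0 < n)%N.

Lemma sum_inv_n : \sum_(u : V) (n%:R : R)^-1 = 1.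
Proof.
rewrite sumr_const (_ : #|_| = n) // -[_ *+ _]mulr_natr mulVf //.
by rewrite pnatr_eq0 -lt0n.
Qed.

Lemma fit_gt0 (S : {set V}) (d : R) X v u : 0 <= d -> 0 < pv_fitness S d X v u.
Proof.
move=> d0; rewrite /pv_fitness; case: ifP => _ //.
by rewrite ltr_pwDl.
Qed.

Lemma fitsum_gt0 (S : {set V}) (d : R) X u : 0 <= d -> 0 < \sum_(x | E x u) pv_fitness S d X x u.
Proof.
move=> d0; rewrite (bigD1 u) ?Erefl //= ltr_pwDl ?fit_gt0 //.
by apply: sumr_ge0 => x _; apply: ltW; exact: fit_gt0.
Qed.

Lemma pv_trans_ge0 (S : {set V}) (d : R) X Y : 0 <= d -> 0 <= pv_trans E S d X Y.
Proof.
move=> d0; apply: sumr_ge0 => u _; apply: mulr_ge0; first by rewrite invr_ge0.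
apply: sumr_ge0 => v _; apply: mulr_ge0; last by rewrite ler0n.
by apply: divr_ge0; apply: ltW; [exact: fit_gt0 | exact: fitsum_gt0].
Qed.

Lemma pv_trans_sum1 (S : {set V}) (d : R) X : 0 <= d -> \sum_Y pv_trans E S d X Y = 1.
Proof.
move=> d0; rewrite /pv_trans sum_shape1 -[RHS]sum_inv_n; apply: eq_bigr => u _.
rewrite -mulr_suml divff ?mulr1 //; apply: lt0r_neq0; exact: fitsum_gt0.
Qed.

Lemma sum_cst_E u (c : R) : \sum_(x | E x u) c = c *+ deg u.
Proof. exact: (sumr_const [pred y | E y u] c). Qed.

Lemma sum_ind u (Q : pred V) :
  \sum_(x | E x u) (Q x)%:R = #|[pred x | E x u && Q x]|%:R :> R.
Proof.
transitivity (\sum_(x | E x u && Q x) (1 : R)); last first.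
  exact: (sumr_const [pred x | E x u && Q x] (1 : R)).
by rewrite big_mkcondr; apply: eq_bigr => x _; case: (Q x).
Qed.

Definition lr (S X : {set V}) (v u : V) : R :=
  if (u \in S) && (0 < nbX X u)%N then (v \in X)%:R / (nbX X u)%:R
  else (deg u)%:R^-1.

Definition Lk (S X Y : {set V}) : R :=
  \sum_u (n%:R)^-1 * \sum_(v | E v u) lr S X v u * (Y == pv_step X u v)%:R.

Lemma lr_ge0 S X v u : 0 <= lr S X v u.
Proof. rewrite /lr; case: ifP => _; by rewrite ?divr_ge0 ?invr_ge0 ?ler0n. Qed.

Lemma lr_sum1 S X u : \sum_(v | E v u) lr S X v u = 1.
Proof.
rewrite /lr; case h: ((u \in S) && (0 < nbX X u)%N).
  case/andP: h => _ k0.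
  rewrite -big_distrl /= sum_ind divff // pnatr_eq0 -lt0n; exact: k0.
rewrite sum_cst_E -[_ *+ _]mulr_natr mulVf // pnatr_eq0 -lt0n; exact: deg_gt0.
Qed.

Lemma Lk_ge0 S X Y : 0 <= Lk S X Y.
Proof.
apply: sumr_ge0 => u _; apply: mulr_ge0; first by rewrite invr_ge0.
by apply: sumr_ge0 => v _; apply: mulr_ge0; rewrite ?ler0n ?lr_ge0.
Qed.

Lemma Lk_sum1 S X : \sum_Y Lk S X Y = 1.
Proof.
rewrite /Lk sum_shape1 -[RHS]sum_inv_n; apply: eq_bigr => u _.
by rewrite lr_sum1 mulr1.
Qed.

Lemma fit_sum S (d : R) X u : \sum_(x | E x u) pv_fitness S d X x u =
  (if u \in S then (nbX X u)%:R * d else 0) + (deg u)%:R.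
Proof.
rewrite /pv_fitness; case uS: (u \in S).
  transitivity (\sum_(x | E x u) (d * (x \in X)%:R + 1)).
    by apply: eq_bigr => x _; rewrite andbT; case: (x \in X); rewrite ?mulr1 ?mulr0 ?add0r // addrC.
  rewrite big_split /= -mulr_sumr sum_ind sum_cst_E mulrC; congr (_ + _).
by rewrite add0r; under eq_bigr do rewrite andbF; rewrite sum_cst_E.
Qed.

Lemma ratio_cvg S X v u : E v u ->
  ((fun d => pv_fitness S d X v u / \sum_(x | E x u) pv_fitness S d X x u)
     @ +oo --> lr S X v u)%classic.
Proof.
move=> Evu; under eq_fun do rewrite fit_sum.
rewrite /lr /pv_fitness; case uS: (u \in S) => /=; last first.
  under eq_fun do rewrite andbF add0r.
  by rewrite div1r; exact: cvg_cst.
have [k0|] := ltnP 0 (nbX X u); last first.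
  rewrite leqn0 => /eqP k0; rewrite k0.
  have vX : (v \in X) = false.
    apply/negbTE/negP => vX; move: k0 => /eqP; rewrite -leqn0 leqNgt => /negP; apply.
    by apply/card_gt0P; exists v; rewrite inE /= Evu vX.
  under eq_fun do rewrite vX /= mul0r add0r.
  by rewrite div1r; exact: cvg_cst.
rewrite andbT.
have := @cvg_ratio R (v \in X)%:R 1 (deg u)%:R (nbX X u)%:R.
rewrite ltr0n => /(_ k0); apply: cvg_trans; apply: near_eq_cvg; near=> d.
by case: (v \in X); [rewrite mul1r (addrC d) | rewrite mul0r add0r].
Unshelve. all: by end_near.
Qed.

Lemma trans_cvg S X Y : ((fun d => pv_trans E S d X Y) @ +oo --> Lk S X Y)%classic.
Proof.
apply: cvg_sumf => u; apply: cvgMl_tmp; apply: cvg_sumf_cond => v Evu.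
apply: cvgMr_tmp; exact: ratio_cvg.
Qed.

Lemma shape_supp (c : R) (W : V -> V -> R) (f : V -> V -> {set V}) Y :
  (\sum_u c * \sum_(v | E v u) W u v * (Y == f u v)%:R) != 0 ->
  exists u v, Y = f u v.
Proof.
move=> H; case: (pselect (exists u v, Y = f u v)) => // N; exfalso.
move/eqP: H; apply; apply: big1 => u _.
rewrite big1 ?mulr0 // => v _; case: eqP => [Yf|]; last by rewrite mulr0.
by exfalso; apply: N; exists u, v.
Qed.

Lemma step_T u v : pv_step [set: V] u v = [set: V].
Proof. by rewrite /pv_step inE; apply/setP => w; rewrite !inE orbT. Qed.

Lemma step_0 u v : pv_step emp u v = emp.
Proof. by rewrite /pv_step inE; apply/setP => w; rewrite !inE andbF. Qed.

Lemma crossing (X : {set V}) x y : x \in X -> y \notin X ->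
  exists u v, [/\ u \in X, v \notin X & E v u].
Proof.
move=> xX yX; case: (pselect (exists u v, [/\ u \in X, v \notin X & E v u])) => // N.
exfalso; have cl : closed_mem E (mem X).
  move=> a b Eab; apply/idP/idP => [aX|bX].
    apply/negPn/negP => bX; apply: N; exists a, b; split => //; by rewrite Esym.
  apply/negPn/negP => aX; apply: N; exists b, a; split => //.
have := closed_connect cl (Econn x y); rewrite xX => /esym; apply/negP; exact: yX.
Qed.
Definition aT (X : {set V}) := X == full.
Definition a0 (X : {set V}) := X == emp.
Definition aA := predU aT a0.
Definition eta : R := (n%:R)^-1 * (n%:R)^-1.

Lemma n_pos : 0 < (n%:R : R). Proof. by rewrite ltr0n. Qed.

Lemma invn_le (k : nat) : (0 < k)%N -> (k <= n)%N -> (n%:R : R)^-1 <= (k%:R)^-1.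
Proof.
move=> k0 kn; rewrite lef_pV2 ?posrE ?ltr0n ?ler_nat //.
Qed.

Lemma lr_lb S X v u : E v u -> (u \in S -> v \in X) -> (n%:R)^-1 <= lr S X v u.
Proof.
move=> Evu H; rewrite /lr; case: ifP => [/andP [uS k0]|_].
  by rewrite (H uS) mul1r invn_le // max_card.
by rewrite invn_le ?deg_gt0 ?deg_le.
Qed.

Lemma Lk_single S X u v : E v u ->
  (n%:R)^-1 * lr S X v u <= Lk S X (pv_step X u v).
Proof.
move=> Evu; rewrite /Lk (bigD1 u) //= -[X in X <= _]addr0; apply: lerD; last first.
  apply: sumr_ge0 => w _; apply: mulr_ge0; first by rewrite invr_ge0 ler0n.
  by apply: sumr_ge0 => z _; apply: mulr_ge0; rewrite ?ler0n ?lr_ge0.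
apply: ler_wpM2l; first by rewrite invr_ge0 ler0n.
rewrite (bigD1 v) //= eqxx mulr1 lerDl.
by apply: sumr_ge0 => z _; apply: mulr_ge0; rewrite ?ler0n ?lr_ge0.
Qed.

Lemma Lk_step_lb S X u v : E v u -> (u \in S -> v \in X) ->
  eta <= Lk S X (pv_step X u v).
Proof.
move=> Evu H; apply: le_trans (Lk_single S X Evu); apply: ler_wpM2l.
  by rewrite invr_ge0 ler0n.
exact: lr_lb.
Qed.

Lemma eta_ge0 : 0 <= eta. Proof. by rewrite mulr_ge0 // invr_ge0 ler0n. Qed.
Lemma eta_le1 : eta <= 1.
Proof.
have h : (n%:R : R)^-1 <= 1 by rewrite invr_le1 ?ler1n ?unitfE ?pnatr_eq0 -?lt0n ?ltr0n.
by rewrite -[1]mulr1; apply: ler_pM => //; rewrite invr_ge0 ler0n.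
Qed.

Lemma hitL_abs S k X : aA X -> hit (Lk S) aA k X = 1.
Proof. by case: k => [|k] /= ->. Qed.

Lemma path_down S k : forall X : {set V}, X :&: S = emp -> (#|X| <= k)%N ->
  eta ^+ k <= hit (Lk S) aA k X.
Proof.
elim: k => [|k IH] X XS Xk.
  have -> : X = emp by apply/eqP; rewrite -cards_eq0 -leqn0.
  by rewrite hitL_abs ?expr0 //= /aA /a0 /= eqxx orbT.
case aX: (aA X); first by rewrite hitL_abs // exprn_ile1 ?eta_ge0 ?eta_le1.
have /norP [XT X0] : ~~ ((X == full) || (X == emp)) by move: aX; rewrite /aA /aT /a0 /= => ->.
have [x xX] : exists x, x \in X by apply/set0Pn.
have [y yX] : exists y, y \notin X.
  by apply/existsP; move: XT; apply: contraNT; rewrite negb_exists => /forallP H;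
     apply/eqP/setP => z; rewrite inE; move: (H z); rewrite negbK.
have [u [v [uX vX Evu]]] := crossing xX yX.
have uS : u \notin S.
  by apply/negP => uS; move/setP: XS => /(_ u); rewrite !inE uX uS.
have Hstep : pv_step X u v = X :\ u by rewrite /pv_step (negbTE vX).
apply: le_trans _ (hit_step (Lk_ge0 S) k (pv_step X u v) (negbT aX)).
rewrite exprSr mulrC; apply: ler_pM; rewrite ?eta_ge0 ?exprn_ge0 ?eta_ge0 //.
  by apply: Lk_step_lb => // uS'; rewrite uS' in uS.
rewrite Hstep; apply: IH.
  apply/setP => z; move/setP: XS => /(_ z); rewrite !inE => <-.
  case zS: (z \in S); rewrite ?andbF ?andbT //.
  by case: eqP => // zu; move: uS; rewrite -zu zS.
by move: Xk; rewrite (cardsD1 u X) uX add1n ltnS.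
Qed.

Lemma notfull X : X != full -> exists y, y \notin X.
Proof.
move=> XT; apply/existsP; move: XT; apply: contraNT; rewrite negb_exists => /forallP H.
by apply/eqP/setP => z; rewrite inE; move: (H z); rewrite negbK.
Qed.

Lemma path_up S k : forall X, X :&: S != emp -> (#|~: X| <= k)%N ->
  eta ^+ k <= hit (Lk S) aA k X.
Proof.
elim: k => [|k IH] X XS Xk.
  have -> : X = full.
    apply/eqP; move: Xk; rewrite leqn0 cards_eq0 => /eqP H; apply/eqP/setP => z.
    by move/setP: H => /(_ z); rewrite !inE => /negbFE ->.
  by rewrite hitL_abs ?expr0 //= /aA /aT /= eqxx.
case aX: (aA X); first by rewrite hitL_abs // exprn_ile1 ?eta_ge0 ?eta_le1.
have /norP [XT X0] : ~~ ((X == full) || (X == emp)) by move: aX; rewrite /aA /aT /a0 /= => ->.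
have [x xX] : exists x, x \in X by apply/set0Pn.
have [y yX] := notfull XT.
have [u [v [uX vX Evu]]] : exists u v, [/\ u \in ~: X, v \notin ~: X & E v u].
  by apply: (crossing (x := y) (y := x)); rewrite !inE ?yX ?xX.
move: uX vX; rewrite !inE negbK => uX vX.
have Hstep : pv_step X u v = u |: X by rewrite /pv_step vX.
apply: le_trans _ (hit_step (Lk_ge0 S) k (pv_step X u v) (negbT aX)).
rewrite exprSr mulrC; apply: ler_pM; rewrite ?eta_ge0 ?exprn_ge0 ?eta_ge0 //.
  by apply: Lk_step_lb.
rewrite Hstep; apply: IH.
  move: XS; apply: contraNN => /eqP H; apply/eqP/setP => z; move/setP: H => /(_ z).
  by rewrite !inE; case: (z \in X); rewrite ?orbT //= andbF.
move: Xk; rewrite (cardsD1 u (~: X)) !inE uX add1n ltnS; apply: leq_trans.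
by apply: subset_leq_card; apply/fintype.subsetP => z; rewrite !inE negb_or.
Qed.

Lemma absorb_lb S X : eta ^+ n <= hit (Lk S) aA n X.
Proof.
have Hmono := hit_mono (Lk_ge0 S).
have [XS|XS] := eqVneq (X :&: S) emp.
  apply: le_trans (Hmono _ _ _ _ (max_card _)).
  apply: le_trans (path_down XS (leqnn _)).
  by apply: (ler_wiXn2l eta_ge0 eta_le1); exact: max_card.
apply: le_trans (Hmono _ _ _ _ (max_card (mem (~: X)))).
apply: le_trans (path_up XS (leqnn _)).
by apply: (ler_wiXn2l eta_ge0 eta_le1); exact: max_card.
Qed.

Lemma eta_gt0 : 0 < eta. Proof. by rewrite mulr_gt0 // invr_gt0 n_pos. Qed.

Lemma qhL_cvg0 S X : (qh (Lk S) aA k X @[k --> \oo] --> 0)%classic.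
Proof.
have H : forall Y, qh (Lk S) aA n Y <= 1 - eta ^+ n.
  by move=> Y; rewrite /qh lerB // absorb_lb.
apply: (qh_cvg0 (Lk_ge0 S) (Lk_sum1 S) _ _ H).
- by rewrite exprn_gt0 // eta_gt0.
- by rewrite exprn_ile1 ?eta_ge0 ?eta_le1.
Qed.

Definition newB X B u := if (0 < nbX X u)%N then u |: B else B.

Fixpoint Eaug (phi : {set V} -> {set V} -> R) (k : nat) X B : R :=
  match k with
  | 0 => phi X B
  | k'.+1 => \sum_u (n%:R)^-1 * \sum_(v | E v u) (deg u)%:R^-1 *
               Eaug phi k' (pv_step X u v) (newB X B u)
  end.

Lemma deg_sum1 u : \sum_(v | E v u) (deg u)%:R^-1 = 1 :> R.
Proof.
rewrite sum_cst_E -[_ *+ _]mulr_natr mulVf // pnatr_eq0 -lt0n; exact: deg_gt0.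
Qed.

Lemma wsum c : \sum_u (n%:R)^-1 * \sum_(v | E v u) (deg u)%:R^-1 * c = c :> R.
Proof.
transitivity (\sum_(u : V) (n%:R)^-1 * c); last first.
  by rewrite -big_distrl /= sum_inv_n mul1r.
apply: eq_bigr => u _; congr (_ * _).
by rewrite -big_distrl /= deg_sum1 mul1r.
Qed.

Lemma Eaug_cst c k X B : Eaug (fun _ _ => c) k X B = c.
Proof.
elim: k X B => [|k IH] X B //=.
by under eq_bigr do under eq_bigr do rewrite IH; rewrite wsum.
Qed.

Lemma Eaug_add phi1 phi2 k X B :
  Eaug (fun X B => phi1 X B + phi2 X B) k X B = Eaug phi1 k X B + Eaug phi2 k X B.
Proof.
elim: k X B => [|k IH] X B //=.
rewrite -big_split /=; apply: eq_bigr => u _; rewrite -mulrDr -big_split /=.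
by congr (_ * _); apply: eq_bigr => v _; rewrite IH mulrDr.
Qed.

Lemma Eaug_opp phi k X B :
  Eaug (fun X B => - phi X B) k X B = - Eaug phi k X B.
Proof.
elim: k X B => [|k IH] X B //=.
rewrite -sumrN; apply: eq_bigr => u _; rewrite -mulrN -sumrN.
by congr (_ * _); apply: eq_bigr => v _; rewrite IH mulrN.
Qed.

Lemma Eaug_le phi1 phi2 k X B : (forall X B, phi1 X B <= phi2 X B) ->
  Eaug phi1 k X B <= Eaug phi2 k X B.
Proof.
move=> H; elim: k X B => [|k IH] X B //=.
apply: ler_sum => u _; apply: ler_wpM2l; first by rewrite invr_ge0 ler0n.
apply: ler_sum => v _; apply: ler_wpM2l; first by rewrite invr_ge0 ler0n.
exact: IH.
Qed.

Lemma Eaug_ge0 phi k X B : (forall X B, 0 <= phi X B) -> 0 <= Eaug phi k X B.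
Proof. by move=> H; rewrite -(Eaug_cst 0 k X B); apply: Eaug_le. Qed.

Lemma Eaug_le1 phi k X B : (forall X B, phi X B <= 1) -> Eaug phi k X B <= 1.
Proof. by move=> H; rewrite -(Eaug_cst 1 k X B); apply: Eaug_le. Qed.

Lemma Eaug_full k B : Eaug (fun X _ => (X == full)%:R) k full B = 1.
Proof.
elim: k B => [|k IH] B /=; first by rewrite eqxx.
by under eq_bigr do under eq_bigr do rewrite step_T IH; rewrite wsum.
Qed.

Lemma pv_hit_neutral (d : R) k X B :
  pv_hit E emp d k X = Eaug (fun X _ => (X == full)%:R) k X B.
Proof.
rewrite pv_hitE; elim: k X B => [|k IH] X B //=.
case: ifP => [/eqP ->|_]; first by symmetry; exact: (Eaug_full k.+1 B).
under eq_bigr do rewrite (IH _ B).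
rewrite (sum_shape (n%:R^-1) _ (fun u v => pv_step X u v)
          (fun Y => Eaug (fun X _ => (X == full)%:R) k Y B)).
apply: eq_bigr => u _; congr (_ * _); apply: eq_bigr => v Evu.
rewrite -(IH _ (newB X B u)) -(IH _ B); congr (_ * _).
rewrite /pv_fitness; under eq_bigr do rewrite inE andbF.
by rewrite inE andbF sum_cst_E -[_ *+ _]mulr_natr div1r.
Qed.

Lemma shape_supp2 (c : R) (W : V -> V -> R) (f : V -> V -> {set V}) Y :
  (\sum_u c * \sum_(v | E v u) W u v * (Y == f u v)%:R) != 0 ->
  exists u v, [/\ E v u, W u v != 0 & Y = f u v].
Proof.
move=> H; case: (pselect (exists u v, [/\ E v u, W u v != 0 & Y = f u v])) => // N.
exfalso; move/eqP: H; apply; apply: big1 => u _.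
rewrite big1 ?mulr0 // => v Evu; case: eqP => [Yf|]; last by rewrite mulr0.
have [->|W0] := eqVneq (W u v) 0; first by rewrite mul0r.
by exfalso; apply: N; exists u, v.
Qed.

Definition metS S X := X :&: S != emp.

Lemma Lk_closedS S X Y : metS S X -> Lk S X Y != 0 -> metS S Y.
Proof.
move=> /set0Pn [s]; rewrite inE => /andP [sX sS].
case/shape_supp2 => u [v [Evu lr0 ->]]; apply/set0Pn.
have [us|us] := eqVneq u s.
  subst u; move: lr0; rewrite /lr sS /=.
  have -> : (0 < nbX X s)%N by apply/card_gt0P; exists s; rewrite inE /= Erefl sX.
  have [vX|vX] := boolP (v \in X); last by rewrite mul0r eqxx.
  by move=> _; exists s; rewrite /pv_step vX !inE eqxx sS.
exists s; rewrite /pv_step; case: (v \in X); rewrite !inE ?sX ?sS ?orbT //.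
by rewrite eq_sym us.
Qed.

Lemma Lk_closedT S X Y : aT X -> Lk S X Y != 0 -> aT Y.
Proof. by move=> /eqP -> /shape_supp2 [u [v [_ _ ->]]]; rewrite /aT step_T. Qed.

Lemma Lk_closed0 S X Y : a0 X -> Lk S X Y != 0 -> a0 Y.
Proof. by move=> /eqP -> /shape_supp2 [u [v [_ _ ->]]]; rewrite /a0 step_0. Qed.

Lemma tr_closedT S (d : R) X Y : aT X -> pv_trans E S d X Y != 0 -> aT Y.
Proof. by move=> /eqP -> /shape_supp2 [u [v [_ _ ->]]]; rewrite /aT step_T. Qed.

Lemma tr_closed0 S (d : R) X Y : a0 X -> pv_trans E S d X Y != 0 -> a0 Y.
Proof. by move=> /eqP -> /shape_supp2 [u [v [_ _ ->]]]; rewrite /a0 step_0. Qed.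

Lemma full_neq0 : full != emp.
Proof.
apply/set0Pn; have /card_gt0P [x _] := Vn0; by exists x; rewrite inE.
Qed.

Lemma aT_a0 X : aT X -> ~~ a0 X.
Proof. by rewrite /aT /a0 => /eqP ->; exact: full_neq0. Qed.

Lemma a0_aT X : a0 X -> ~~ aT X.
Proof. by rewrite /aT /a0 => /eqP ->; rewrite eq_sym full_neq0. Qed.

Definition phiS S X B : R := ((X == emp) && (B :&: S == emp))%:R.

Lemma newB_sub X B u : B \subset newB X B u.
Proof. by rewrite /newB; case: ifP => _ //; exact: finset.subsetUr. Qed.

Lemma Eaug_met S k X B : B :&: S != emp -> Eaug (phiS S) k X B = 0.
Proof.
elim: k X B => [|k IH] X B BS /=; first by rewrite /phiS (negbTE BS) andbF.
apply: big1 => u _; rewrite big1 ?mulr0 // => v _; rewrite IH ?mulr0 //.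
move: BS; apply: contraNN => /eqP H; apply/eqP/setP => z; move/setP: H => /(_ z).
rewrite !inE; case zS: (z \in S); rewrite ?andbT ?andbF // => H; apply/negbTE.
by apply: contraFN H => zB; move/fintype.subsetP: (newB_sub X B u) => /(_ z zB).
Qed.

Lemma hit_abs (P : {set V} -> {set V} -> R) (a : pred {set V}) k X : a X -> hit P a k X = 1.
Proof. by case: k => [|k] /= ->. Qed.

Lemma nbX0 u : nbX emp u = 0%N.
Proof. by apply: eq_card0 => x; rewrite in_simpl /= finset.in_set0 andbF. Qed.

Lemma newB0 B u : newB emp B u = B.
Proof. by rewrite /newB nbX0. Qed.

Lemma U1S X S u : X :&: S = emp -> u \notin S -> (u |: X) :&: S = emp.
Proof.
move=> /setP XS uS; apply/setP => z; move: (XS z); rewrite !inE.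
by case: eqP => [->|_] //=; rewrite (negbTE uS) andbF.
Qed.

Lemma D1S X S u : X :&: S = emp -> (X :\ u) :&: S = emp.
Proof.
move=> /setP XS; apply/setP => z; move: (XS z); rewrite !inE.
by case: (z \in X); case: (z \in S); rewrite ?andbF ?andbT.
Qed.

Lemma hit0_met S k X : metS S X -> hit (Lk S) a0 k X = 0.
Proof.
apply: hit_closed0; first exact: Lk_closedS.
by move=> Y; rewrite /metS /a0; apply: contraNN => /eqP ->; rewrite finset.set0I.
Qed.

Lemma couple S k : forall X B, X :&: S = emp -> B :&: S = emp ->
  hit (Lk S) a0 k X = Eaug (phiS S) k X B.
Proof.
elim: k => [|k IH] X B XS BS; first by rewrite /= /phiS /a0 BS eqxx andbT.
rewrite [LHS]/=; case X0: (a0 X).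
  move/eqP: X0 => ->; rewrite /=.
  under eq_bigr do under eq_bigr do rewrite step_0 newB0 -IH ?finset.set0I // hit_abs /a0 //.
  by rewrite wsum.
rewrite (sum_shape (n%:R^-1) _ (fun u v => pv_step X u v) (hit (Lk S) a0 k)) /=.
apply: eq_bigr => u _; congr (_ * _).
case uS: (u \in S); last first.
  have lrE : forall v, lr S X v u = (deg u)%:R^-1 by move=> v; rewrite /lr uS.
  apply: eq_bigr => v _; rewrite lrE; congr (_ * _); apply: IH.
    by rewrite /pv_step; case: (v \in X); [apply: U1S; rewrite ?uS | apply: D1S].
  by rewrite /newB; case: ifP => _ //; apply: U1S; rewrite ?uS.
case nb: (0 < nbX X u)%N.
  rewrite big1; last first.
    move=> v Evu; rewrite /lr uS nb /=; case vX: (v \in X); last by rewrite mul0r mul0r.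
    rewrite hit0_met ?mulr0 // /pv_step vX /metS; apply/set0Pn; exists u.
    by rewrite !inE eqxx uS.
  rewrite big1 // => v _; rewrite Eaug_met ?mulr0 // /newB nb; apply/set0Pn.
  by exists u; rewrite !inE eqxx uS.
have lrE : forall v, lr S X v u = (deg u)%:R^-1 by move=> v; rewrite /lr uS nb.
apply: eq_bigr => v Evu; rewrite lrE; congr (_ * _).
have vX : v \notin X.
  apply/negP => vX; move: nb; rewrite lt0n => /negbFE/eqP; apply/eqP.
  by rewrite -lt0n; apply/card_gt0P; exists v; rewrite inE /= Evu vX.
rewrite /pv_step (negbTE vX) /newB nb; apply: IH => //; exact: D1S.
Qed.

Lemma ext_eq S k X : hit (Lk S) a0 k X = Eaug (phiS S) k X X.
Proof.
have [XS|XS] := eqVneq (X :&: S) emp; first exact: couple.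
by rewrite hit0_met // Eaug_met.
Qed.

Section Fixed.
Variable S : {set V}.

Lemma Le_cvg X : cvgn (fun k => hit (Lk S) a0 k X).
Proof.
apply: nondecreasing_is_cvgn.
  by move=> i j ij; exact: (hit_mono (Lk_ge0 S)).
by exists 1 => _ [k _ <-]; exact: (hit_le1 (Lk_ge0 S) (Lk_sum1 S)).
Qed.

Definition le X := limn (fun k => hit (Lk S) a0 k X).

Lemma LhLe k X : hit (Lk S) aT k X + hit (Lk S) a0 k X = 1 - qh (Lk S) aA k X.
Proof.
have -> : 1 - qh (Lk S) aA k X = hit (Lk S) aA k X by rewrite /qh; ring.
rewrite /aA; symmetry; apply: hit_or.
- exact: Lk_closedT.
- exact: Lk_closed0.
- exact: aT_a0.
Qed.

Lemma Lh_cvg X : ((fun k => hit (Lk S) aT k X) @ \oo --> 1 - le X)%classic.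
Proof.
have -> : (fun k => hit (Lk S) aT k X) =
          (fun k => (1 - qh (Lk S) aA k X) - hit (Lk S) a0 k X).
  by apply: funext => k; rewrite -LhLe addrK.
have hc : ((fun _ : nat => (1 : R)) @ \oo --> (1 : R))%classic by exact: cvg_cst.
have h3 := cvgB (cvgB hc (@qhL_cvg0 S X)) (@Le_cvg X).
by rewrite subr0 in h3; exact: h3.
Qed.

Lemma pv_hit_cvgn (d : R) X : 0 <= d -> cvgn (fun k => pv_hit E S d k X).
Proof.
move=> d0; apply: nondecreasing_is_cvgn.
  by move=> i j ij; rewrite !pv_hitE; exact: (hit_mono (fun X Y => @pv_trans_ge0 S d X Y d0)).
exists 1 => _ [k _ <-]; rewrite pv_hitE.
exact: (hit_le1 (fun X Y => @pv_trans_ge0 S d X Y d0) (fun X => @pv_trans_sum1 S d X d0)).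
Qed.

Lemma fp_lb (d : R) k X : 0 <= d -> hit (pv_trans E S d) aT k X <= fp_conf E S d X.
Proof.
move=> d0; rewrite /fp_conf.
have ND : nondecreasing_seq (fun k => pv_hit E S d k X).
  by move=> i j ij; rewrite !pv_hitE; exact: (hit_mono (fun X Y => @pv_trans_ge0 S d X Y d0)).
by have := nondecreasing_cvgn_le ND (@pv_hit_cvgn d X d0) k; rewrite pv_hitE.
Qed.

Lemma DhDe (d : R) k X : 0 <= d ->
  hit (pv_trans E S d) aT k X + hit (pv_trans E S d) a0 k X <= 1.
Proof.
move=> d0; rewrite -hit_or.
- exact: (hit_le1 (fun X Y => @pv_trans_ge0 S d X Y d0) (fun X => @pv_trans_sum1 S d X d0)).
- exact: tr_closedT.
- exact: tr_closed0.
- exact: aT_a0.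
Qed.

Lemma fp_ub (d : R) k X : 0 <= d -> fp_conf E S d X <= 1 - hit (pv_trans E S d) a0 k X.
Proof.
move=> d0; rewrite /fp_conf; apply: limr_le; first exact: (@pv_hit_cvgn d X d0).
near=> j; have kj : (k <= j)%N by near: j; exact: nbhs_infty_ge.
rewrite pv_hitE; have := DhDe j X d0.
have := hit_mono (fun X Y => @pv_trans_ge0 S d X Y d0) a0 X kj.
rewrite -/(aT) => h1 h2; change (hit (pv_trans E S d) aT j X <= 1 - hit (pv_trans E S d) a0 k X).
lra.
Unshelve. all: by end_near.
Qed.

Lemma conf_cvg X : ((fun d => fp_conf E S d X) @ +oo --> 1 - le X)%classic.
Proof.
apply/cvgrPdist_le => e e0.
have e2 : 0 < e / 2 by rewrite divr_gt0.
have := @Lh_cvg X; move/cvgr_dist_le => /(_ _ e2) [k1 _ H1].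
have := @Le_cvg X; move/cvgr_dist_le => /(_ _ e2) [k2 _ H2].
pose k := maxn k1 k2.
have hk1 := H1 k (leq_maxl k1 k2).
have hk2 := H2 k (leq_maxr k1 k2).
have := @hit_cvg R _ (fun d => pv_trans E S d) (Lk S) aT k X (fun X Y => @trans_cvg S X Y).
move/cvgr_dist_le => /(_ _ e2) c1.
have := @hit_cvg R _ (fun d => pv_trans E S d) (Lk S) a0 k X (fun X Y => @trans_cvg S X Y).
move/cvgr_dist_le => /(_ _ e2) c2.
near=> d.
have d0 : 0 <= d by apply: ltW; near: d; apply: nbhs_pinfty_gt; exact: num_real.
have h1 : `|hit (Lk S) aT k X - hit (pv_trans E S d) aT k X| <= e / 2 by near: d.
have h2 : `|hit (Lk S) a0 k X - hit (pv_trans E S d) a0 k X| <= e / 2 by near: d.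
have lb := fp_lb k X d0; have ub := fp_ub k X d0.
move: hk1 hk2 h1 h2; rewrite !ler_norml => /andP [a1 a2] /andP [b1 b2] /andP [c3 c4] /andP [c5 c6].
rewrite -/(le X) in b1 b2; apply/andP; split; lra.
Unshelve. all: by end_near.
Qed.
End Fixed.

Lemma fp_cvg S : ((fun d => fp E S d) @ +oo -->
   (n%:R)^-1 * \sum_u (1 - le S [set u]))%classic.
Proof.
rewrite /fp; apply: cvgMl_tmp; apply: cvg_sumf => u; exact: conf_cvg.
Qed.

Lemma fp_inf_val S : fp_inf R E S = (n%:R)^-1 * \sum_u (1 - le S [set u]).
Proof. rewrite /fp_inf; apply: cvg_lim; first exact: Rhausdorff. exact: (@fp_cvg S). Qed.

Lemma phi_sub S1 S2 X B :
  phiS S1 X B + phiS S2 X B <= phiS (S1 :|: S2) X B + phiS (S1 :&: S2) X B.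
Proof.
have hI : (B :&: S1 == emp) || (B :&: S2 == emp) -> B :&: (S1 :&: S2) == emp.
  case/orP => /eqP h.
    by rewrite finset.setIA h finset.set0I.
  by rewrite (finset.setIC S1) finset.setIA h finset.set0I.
rewrite /phiS finset.setIUr finset.setU_eq0.
case: (X == emp) => //=.
move: hI; case: (B :&: S1 == emp); case: (B :&: S2 == emp) => /= hI;
  [rewrite hI // | rewrite hI // | rewrite hI // | idtac];
  rewrite /= ?addr0 ?add0r ?lerDl ?ler0n ?lexx //.
Qed.

Lemma le_sub S1 S2 X :
  le S1 X + le S2 X <= le (S1 :|: S2) X + le (S1 :&: S2) X.
Proof.
apply: (ler_cvg_to (cvgD (@Le_cvg S1 X) (@Le_cvg S2 X))
                   (cvgD (@Le_cvg (S1 :|: S2) X) (@Le_cvg (S1 :&: S2) X))).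
near=> k.
change (hit (Lk S1) a0 k X + hit (Lk S2) a0 k X <=
  hit (Lk (S1 :|: S2)) a0 k X + hit (Lk (S1 :&: S2)) a0 k X).
rewrite !ext_eq -!Eaug_add; apply: Eaug_le => Y B.
exact: phi_sub.
Unshelve. all: by end_near.
Qed.

Lemma submod_main : submodular (fun S : {set V} => fp_inf R E S).
Proof.
move=> S1 S2; rewrite !fp_inf_val -!mulrDr; apply: ler_wpM2l.
  by rewrite invr_ge0 ler0n.
rewrite -!big_split /=; apply: ler_sum => u _.
have := le_sub S1 S2 [set u]; lra.
Qed.

End Model.

Unset Implicit Arguments.
Theorem mainTheorem8 (R : realType) (V : finType) (E : rel V) :
  symmetric E ->
  (forall u : V, E u u) ->
  (forall u v : V, connect E u v) ->
  submodular (fun S : {set V} => fp_inf R E S).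
Proof.
move=> Es Er Ec.
have [Vn0|] := ltnP 0 #|V|; first exact: submod_main.
rewrite leqn0 => /eqP V0 S1 S2.
have eqS : forall A B : {set V}, A = B.
  move=> A B; apply/setP => x; exfalso.
  by move: V0; apply/eqP; rewrite -lt0n; apply/card_gt0P; exists x.
by rewrite (eqS (S1 :|: S2) S1) (eqS (S1 :&: S2) S2).
Qed.
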